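(* Let $n\ge2$, let $-1=x_1<\cdots<x_n=1$ be real numbers, and let $U_X=\{-1,1\}\times\{x_1,\ldots,x_n\}$. 1. For any labels $y_1,\ldots,y_n\in\mathbb{R}$, there exists $\mu\in\mathcal{M}(\mathbb{U},\mathbb{R})$ supported in $U_X$ with $f_\mu(x_i)=y_i$ for all $i\in[n]$ (i.e., feasible for the regression problem $\inf\int_{\mathbb{U}}|d\mu(u)|$ subject to $f_\mu(x_i)=y_i$ for all $i$). 2. For any $k\ge1$ and labels $y_1,\ldots,y_n\in[k]$, there exists $\nu\in\mathcal{M}(\mathbb{U},\mathbb{R}^k)$ supported in $U_X$ with $(e_{y_i}-e_l)^Tf_\nu(x_i)\ge\mathbb{1}(y_i\neq l)$ for all $i\in[n]$ and $l\in[k]$ (i.e., feasible for the classification problem $\inf\int_{\mathbb{U}}\|d\mu(u)\|$ subject to these constraints).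
   Context: $[n]=\{1,\ldots,n\}$; $e_j$ is the $j$-th canonical basis vector of $\mathbb{R}^k$; $\mathbb{1}(y_i\neq l)$ is $1$ if $y_i\neq l$ and $0$ otherwise. Let $\mathbb{U}=\{-1,1\}\times[-1,1]$. For $u=(s,c)\in\mathbb{U}$ and $x\in\mathbb{R}$ let $\phi_u(x)=(s(x-c))_+$, where $(t)_+=\max(t,0)$. $\mathcal{M}(\mathbb{U},\mathbb{R}^k)$ is the set of (finite) signed Radon measures on $\mathbb{U}$ with values in $\mathbb{R}^k$, and $f_\mu(x)=\int_{\mathbb{U}}\phi_u(x)\,d\mu(u)$. *)

(* Defs.v *)
From mathcomp Require Import all_boot all_order all_algebra.
From mathcomp Require Import reals.
Set Implicit Arguments. Unset Strict Implicit. Unset Printing Implicit Defensive.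
Import Order.TTheory GRing.Theory Num.Theory.
Local Open Scope ring_scope.

Definition inU (R : realType) (u : R * R) : Prop :=
  (u.1 = -1 \/ u.1 = 1) /\ -1 <= u.2 <= 1.

Definition phi (R : realType) (u : R * R) (x : R) : R :=
  Num.max (u.1 * (x - u.2)) 0.

(* A finitely supported (purely atomic) V-valued signed measure on U,
   given as a finite list of atoms (u, weight) : it denotes
   sum_{(u,w) in mu} w * delta_u.  Any measure in M(U, V) supported in a
   finite set is of this form. *)
Definition atomic_measure (R : realType) (V : lmodType R) := seq ((R * R) * V).

Definition atoms_in_U (R : realType) (V : lmodType R) (mu : atomic_measure V) : Prop :=
  forall a, a \in mu -> inU a.1.

Definition f_mu (R : realType) (V : lmodType R) (mu : atomic_measure V) (x : R) : V :=
  \sum_(a <- mu) phi a.1 x *: a.2.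

Definition supported_in (R : realType) (V : lmodType R) (mu : atomic_measure V)
  (S : R * R -> Prop) : Prop :=
  forall a, a \in mu -> a.2 != 0 -> S a.1.

Definition U_X (R : realType) (n : nat) (x : 'I_n -> R) (u : R * R) : Prop :=
  (u.1 = -1 \/ u.1 = 1) /\ exists j : 'I_n, u.2 = x j.

(* Main.v *)
Require Import Defs.
From mathcomp Require Import all_boot all_order all_algebra.
From mathcomp Require Import reals.
Import Order.TTheory GRing.Theory Num.Theory.
Local Open Scope ring_scope.

Lemma f_mu_cons (R : realType) (V : lmodType R) (a : (R * R) * V)
  (mu : atomic_measure V) t :
  f_mu (a :: mu) t = phi a.1 t *: a.2 + f_mu mu t.
Proof. by rewrite /f_mu big_cons. Qed.

Lemma f_mu_nil (R : realType) (V : lmodType R) t :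
  f_mu ([::] : atomic_measure V) t = 0.
Proof. by rewrite /f_mu big_nil. Qed.

Lemma mono_le (R : realType) (n : nat) (x : 'I_n -> R)
  (hinc : forall i j : 'I_n, (i < j)%N -> x i < x j) (i j : 'I_n) :
  (i <= j)%N -> x i <= x j.
Proof.
rewrite leq_eqVlt => /orP[/eqP h|h].
  by rewrite (val_inj h).
exact: ltW (hinc _ _ h).
Qed.

Lemma interp (R : realType) (V : lmodType R) (n : nat) (x : 'I_n -> R)
  (hn : (2 <= n)%N)
  (hinc : forall i j : 'I_n, (i < j)%N -> x i < x j)
  (hfirst : forall i : 'I_n, nat_of_ord i = 0%N -> x i = -1)
  (hlast : forall i : 'I_n, nat_of_ord i = n.-1 -> x i = 1)
  (y : 'I_n -> V) :
  exists mu : atomic_measure V,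
    atoms_in_U mu /\ supported_in mu (U_X x) /\
    forall i : 'I_n, f_mu mu (x i) = y i.
Proof.
have n0 : (0 < n)%N by apply: leq_trans hn.
have nl : (n.-1 < n)%N by rewrite prednK.
pose i0 := Ordinal n0. pose il := Ordinal nl.
have bnd : forall j : 'I_n, -1 <= x j <= 1.
  move=> j; apply/andP; split.
    by rewrite -(hfirst i0) //; apply: mono_le.
  by rewrite -(hlast il) //; apply: mono_le => //=; rewrite -ltnS prednK.
suff H : forall m, (m <= n)%N -> exists mu : atomic_measure V,
    (forall a, a \in mu -> U_X x a.1) /\
    forall i : 'I_n, (i < m)%N -> f_mu mu (x i) = y i.
  have [mu [H1 H2]] := H n (leqnn n).
  exists mu; split; last split.
  - move=> a /H1 [h1 [j hj]]; split => //; rewrite hj; exact: bnd.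
  - by move=> a /H1.
  - by move=> i; apply: H2.
elim=> [|m IH] hm.
  by exists [::]; split.
have [mu [H1 H2]] := IH (ltnW hm).
case: m IH hm H1 H2 => [|m'] IH hm H1 H2.
  exists [:: ((-1, 1), 2^-1 *: y i0)]; split.
    move=> a; rewrite inE => /eqP -> /=; split; first by left.
    by exists il; rewrite hlast.
  move=> i; rewrite ltnS leqn0 => /eqP hi.
  have -> : i = i0 by apply: val_inj.
  rewrite f_mu_cons f_mu_nil addr0 /= /phi /= hfirst //.
  have -> : Num.max (-1 * (-1 - 1)) 0 = 2 :> R.
    by rewrite mulN1r opprB opprK (_ : 1 + 1 = 2) // max_l.
  by rewrite scalerA mulfV ?scale1r // pnatr_eq0.
have hp : (m' < n)%N by apply: leq_trans hm; rewrite ltnS leqnSn.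
pose jm := Ordinal hm.
pose jp := Ordinal hp.
have dpos : 0 < x jm - x jp by rewrite subr_gt0; apply: hinc => /=.
exists (((1, x jp), (x jm - x jp)^-1 *: (y jm - f_mu mu (x jm))) :: mu); split.
  move=> a; rewrite inE => /orP[/eqP -> /=|/H1 //]; split; first by right.
  by exists jp.
move=> i; rewrite ltnS leq_eqVlt => /orP[/eqP hi|hi].
  have -> : i = jm by apply: val_inj.
  rewrite f_mu_cons /phi /= mul1r max_l; last exact: ltW.
  by rewrite scalerA mulfV ?gt_eqF // scale1r subrK.
rewrite f_mu_cons /phi /= mul1r max_r ?scale0r ?add0r; first exact: H2.
by rewrite subr_le0; apply: mono_le => //=; rewrite -ltnS.
Qed.

Theorem lemma3 (R : realType) (n : nat) (x : 'I_n -> R)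
  (hn : (2 <= n)%N)
  (hinc : forall i j : 'I_n, (i < j)%N -> x i < x j)
  (hfirst : forall i : 'I_n, nat_of_ord i = 0%N -> x i = -1)
  (hlast : forall i : 'I_n, nat_of_ord i = n.-1 -> x i = 1) :
  (* 1. regression feasibility *)
  (forall y : 'I_n -> R,
     exists mu : atomic_measure R^o,
       atoms_in_U mu /\ supported_in mu (U_X x) /\
       forall i : 'I_n, f_mu mu (x i) = y i)
  /\
  (* 2. classification feasibility, labels in [k] represented by 'I_k *)
  (forall (k : nat) (y : 'I_n -> 'I_k), (1 <= k)%N ->
     exists nu : atomic_measure 'rV[R]_k,
       atoms_in_U nu /\ supported_in nu (U_X x) /\
       forall (i : 'I_n) (l : 'I_k),
         (if y i != l then 1 else 0) <=
           (f_mu nu (x i)) ord0 (y i) - (f_mu nu (x i)) ord0 l).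
Proof.
split.
  by move=> y; apply: interp.
move=> k y _.
have [nu [H1 [H2 H3]]] :=
  @interp R _ n x hn hinc hfirst hlast (fun i => (delta_mx 0 (y i) : 'rV[R]_k)).
exists nu; split => //; split => // i l.
rewrite H3 !mxE !eqxx /=.
case: eqP => [->|/eqP h]; first by rewrite eqxx subrr.
by rewrite eq_sym (negbTE h) subr0.
Qed.
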